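(* Let $L=L_1\times L_2$ where $L_1$ and $L_2$ are $C$-lattices, and let $n\ge1$. (1) $q_1$ is a quasi $n$-absorbing element of $L_1$ if and only if $(q_1,1_{L_2})$ is a quasi $n$-absorbing element of $L$. (2) $q_2$ is a quasi $n$-absorbing element of $L_2$ if and only if $(1_{L_1},q_2)$ is a quasi $n$-absorbing element of $L$.
   Context: A multiplicative lattice is a complete lattice with least element $0$ and compact greatest element $1$, equipped with a commutative, associative product that distributes over arbitrary joins and has $1$ as multiplicative identity. An element $a$ is compact if $a\le\bigvee_{\alpha\in I}a_\alpha$ implies $a\le\bigvee_{\alpha\in I_0}a_\alpha$ for some finite $I_0\subseteq I$. A $C$-lattice is a multiplicative lattice generated under joins by a multiplicatively closed set of compact elements. $L_1\times L_2$ carries the componentwise order and product. $a^0=1$. A proper element $q$ ($q<1$) of a multiplicative lattice $M$ is quasi $n$-absorbing if whenever $a^nb\le q$ for some compact $a,b\in M$, then $a^n\le q$ or $a^{n-1}b\le q$. *)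

(* Defs.v *)
From Stdlib Require Import List.

Record MLData := {
  car : Type;
  le : car -> car -> Prop;
  join : (car -> Prop) -> car;
  mul : car -> car -> car;
  zero : car;
  one : car
}.

Arguments le {_} _ _.
Arguments join {_} _.
Arguments mul {_} _ _.
Arguments zero {_}.
Arguments one {_}.

Definition ijoin {L : MLData} {I : Type} (f : I -> car L) : car L :=
  join (fun x => exists i, x = f i).

Definition compact {L : MLData} (a : car L) : Prop :=
  forall (I : Type) (f : I -> car L),
    le a (ijoin f) ->
    exists I0 : list I, le a (join (fun x => exists i, In i I0 /\ x = f i)).

Definition is_mult_lattice (L : MLData) : Prop :=
  (forall x : car L, le x x) /\
  (forall x y : car L, le x y -> le y x -> x = y) /\
  (forall x y z : car L, le x y -> le y z -> le x z) /\
  (forall (S : car L -> Prop) x, S x -> le x (join S)) /\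
  (forall (S : car L -> Prop) u, (forall x, S x -> le x u) -> le (join S) u) /\
  (forall x : car L, le zero x) /\
  (forall x : car L, le x one) /\
  compact (one : car L) /\
  (forall x y : car L, mul x y = mul y x) /\
  (forall x y z : car L, mul x (mul y z) = mul (mul x y) z) /\
  (forall x : car L, mul one x = x) /\
  (forall (a : car L) (S : car L -> Prop),
     mul a (join S) = join (fun y => exists s, S s /\ y = mul a s)).

Definition is_C_lattice (L : MLData) : Prop :=
  is_mult_lattice L /\
  exists C : car L -> Prop,
    (forall c, C c -> compact c) /\
    (C one /\ forall c d, C c -> C d -> C (mul c d)) /\
    (forall x : car L, exists S : car L -> Prop,
        (forall s, S s -> C s) /\ x = join S).

Definition prodML (L1 L2 : MLData) : MLData := {|
  car := (car L1 * car L2)%type;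
  le := fun p q => le (fst p) (fst q) /\ le (snd p) (snd q);
  join := fun S => (join (fun x => exists y, S (x, y)),
                    join (fun y => exists x, S (x, y)));
  mul := fun p q => (mul (fst p) (fst q), mul (snd p) (snd q));
  zero := (zero, zero);
  one := (one, one)
|}.

Fixpoint mpow {L : MLData} (n : nat) (a : car L) : car L :=
  match n with
  | O => one
  | S k => mul a (mpow k a)
  end.

Definition quasi_n_absorbing {L : MLData} (n : nat) (q : car L) : Prop :=
  (le q one /\ q <> one) /\
  forall a b : car L, compact a -> compact b ->
    le (mul (mpow n a) b) q ->
    le (mpow n a) q \/ le (mul (mpow (n - 1) a) b) q.

(* Main.v *)
Require Import Defs.
From Stdlib Require Import List.

Section Aux.
Variable L : MLData.
Hypothesis HL : is_mult_lattice L.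

Lemma ml_refl (x : car L) : le x x.
Proof. destruct HL as [h _]. apply h. Qed.
Lemma ml_trans (x y z : car L) : le x y -> le y z -> le x z.
Proof. destruct HL as [_ [_ [h _]]]. apply h. Qed.
Lemma ml_ub (S : car L -> Prop) x : S x -> le x (join S).
Proof. destruct HL as [_ [_ [_ [h _]]]]. apply h. Qed.
Lemma ml_lub (S : car L -> Prop) u : (forall x, S x -> le x u) -> le (join S) u.
Proof. destruct HL as [_ [_ [_ [_ [h _]]]]]. apply h. Qed.
Lemma ml_zero (x : car L) : le zero x.
Proof. destruct HL as [_ [_ [_ [_ [_ [h _]]]]]]. apply h. Qed.
Lemma ml_one (x : car L) : le x one.
Proof. destruct HL as [_ [_ [_ [_ [_ [_ [h _]]]]]]]. apply h. Qed.
Lemma join_mono (S T : car L -> Prop) : (forall x, S x -> T x) -> le (join S) (join T).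
Proof. intros H. apply ml_lub. intros x Hx. apply ml_ub. auto. Qed.
End Aux.

Fixpoint somes {I : Type} (l : list (option I)) : list I :=
  match l with
  | nil => nil
  | None :: r => somes r
  | Some i :: r => i :: somes r
  end.

Lemma in_somes {I : Type} (l : list (option I)) i : In (Some i) l -> In i (somes l).
Proof.
  induction l as [|[j|] r IH]; simpl; intros H; [contradiction| |].
  - destruct H as [H|H]; [left; congruence | right; auto].
  - destruct H as [H|H]; [discriminate | auto].
Qed.

Lemma mpow_prod (L1 L2 : MLData) n (a : car L1) (b : car L2) :
  @mpow (prodML L1 L2) n (a, b) = (mpow n a, mpow n b).
Proof. induction n; simpl; [reflexivity| rewrite IHn; reflexivity]. Qed.

Lemma compact_l (L1 L2 : MLData) : is_mult_lattice L1 -> is_mult_lattice L2 ->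
  forall a : car L1, compact a -> @compact (prodML L1 L2) (a, zero).
Proof.
  intros H1 H2 a Ha I f [Hf _]. simpl in Hf.
  destruct (Ha I (fun i => fst (f i))) as [I0 HI0].
  { eapply ml_trans; [exact H1| exact Hf|]. apply join_mono; auto.
    intros x [y [i Hi]]. exists i. rewrite <- Hi. reflexivity. }
  exists I0. split; simpl; [|apply ml_zero; auto].
  eapply ml_trans; [exact H1| exact HI0|]. apply join_mono; auto.
  intros x [i [Hi ->]]. exists (snd (f i)), i. split; auto. destruct (f i); reflexivity.
Qed.

Lemma compact_r (L1 L2 : MLData) : is_mult_lattice L1 -> is_mult_lattice L2 ->
  forall a : car L2, compact a -> @compact (prodML L1 L2) (zero, a).
Proof.
  intros H1 H2 a Ha I f [_ Hf]. simpl in Hf.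
  destruct (Ha I (fun i => snd (f i))) as [I0 HI0].
  { eapply ml_trans; [exact H2| exact Hf|]. apply join_mono; auto.
    intros x [y [i Hi]]. exists i. rewrite <- Hi. reflexivity. }
  exists I0. split; simpl; [apply ml_zero; auto|].
  eapply ml_trans; [exact H2| exact HI0|]. apply join_mono; auto.
  intros x [i [Hi ->]]. exists (fst (f i)), i. split; auto. destruct (f i); reflexivity.
Qed.

Lemma compact_fst (L1 L2 : MLData) : is_mult_lattice L1 -> is_mult_lattice L2 ->
  forall (a : car L1) (b : car L2), @compact (prodML L1 L2) (a, b) -> compact a.
Proof.
  intros H1 H2 a b Hc I f Ha.
  set (g := fun o : option I => match o with None => (zero, b) | Some i => (f i, one) end
            : car (prodML L1 L2)).
  destruct (Hc (option I) g) as [I0 HI0].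
  { split; simpl.
    - eapply ml_trans; [exact H1|exact Ha|]. apply join_mono; auto.
      intros x [i ->]. exists one, (Some i). reflexivity.
    - apply ml_ub; auto. exists zero, None. reflexivity. }
  exists (somes I0). destruct HI0 as [HI0 _]. simpl in HI0.
  eapply ml_trans; [exact H1|exact HI0|]. apply ml_lub; auto.
  intros x [y [[i|] [Hi Heq]]]; simpl in Heq.
  - apply ml_ub; auto. exists i. split; [apply in_somes; auto| congruence].
  - inversion Heq; subst. apply ml_zero; auto.
Qed.

Lemma compact_snd (L1 L2 : MLData) : is_mult_lattice L1 -> is_mult_lattice L2 ->
  forall (a : car L1) (b : car L2), @compact (prodML L1 L2) (a, b) -> compact b.
Proof.
  intros H1 H2 a b Hc I f Hb.
  set (g := fun o : option I => match o with None => (a, zero) | Some i => (one, f i) end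
            : car (prodML L1 L2)).
  destruct (Hc (option I) g) as [I0 HI0].
  { split; simpl.
    - apply ml_ub; auto. exists zero, None. reflexivity.
    - eapply ml_trans; [exact H2|exact Hb|]. apply join_mono; auto.
      intros x [i ->]. exists one, (Some i). reflexivity. }
  exists (somes I0). destruct HI0 as [_ HI0]. simpl in HI0.
  eapply ml_trans; [exact H2|exact HI0|]. apply ml_lub; auto.
  intros x [y [[i|] [Hi Heq]]]; simpl in Heq.
  - apply ml_ub; auto. exists i. split; [apply in_somes; auto| congruence].
  - inversion Heq; subst. apply ml_zero; auto.
Qed.

Theorem mainTheorem12 (L1 L2 : MLData) (n : nat) :
  is_C_lattice L1 -> is_C_lattice L2 -> 1 <= n ->
  (forall q1 : car L1,
     quasi_n_absorbing n q1 <->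
     @quasi_n_absorbing (prodML L1 L2) n (q1, one)) /\
  (forall q2 : car L2,
     quasi_n_absorbing n q2 <->
     @quasi_n_absorbing (prodML L1 L2) n (one, q2)).
Proof.
  intros [H1 _] [H2 _] _. split; intros q; split.
  - intros [[Hle Hne] Hq]. split.
    + split; [split; simpl; [exact Hle| apply ml_refl; auto]|].
      intros E. apply Hne. inversion E; reflexivity.
    + intros [a b] [c d] Hab Hcd Hm. rewrite !mpow_prod in *.
      destruct Hm as [Hm1 _]. simpl in Hm1.
      destruct (Hq a c (compact_fst _ _ H1 H2 _ _ Hab) (compact_fst _ _ H1 H2 _ _ Hcd) Hm1)
        as [h|h]; [left|right]; split; simpl; auto; apply ml_one; auto.
  - intros [[[Hle _] Hne] Hq]. split.
    + split; [exact Hle|]. intros E. apply Hne. simpl. congruence.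
    + intros a c Ha Hc Hm.
      destruct (Hq (a, zero) (c, zero) (compact_l _ _ H1 H2 _ Ha) (compact_l _ _ H1 H2 _ Hc))
        as [h|h]; rewrite ?mpow_prod in *.
      * split; simpl; [exact Hm| apply ml_one; auto].
      * left. apply h.
      * right. apply h.
  - intros [[Hle Hne] Hq]. split.
    + split; [split; simpl; [apply ml_refl; auto| exact Hle]|].
      intros E. apply Hne. inversion E; reflexivity.
    + intros [a b] [c d] Hab Hcd Hm. rewrite !mpow_prod in *.
      destruct Hm as [_ Hm1]. simpl in Hm1.
      destruct (Hq b d (compact_snd _ _ H1 H2 _ _ Hab) (compact_snd _ _ H1 H2 _ _ Hcd) Hm1)
        as [h|h]; [left|right]; split; simpl; auto; apply ml_one; auto.
  - intros [[[_ Hle] Hne] Hq]. split.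
    + split; [exact Hle|]. intros E. apply Hne. simpl. congruence.
    + intros a c Ha Hc Hm.
      destruct (Hq (zero, a) (zero, c) (compact_r _ _ H1 H2 _ Ha) (compact_r _ _ H1 H2 _ Hc))
        as [h|h]; rewrite ?mpow_prod in *.
      * split; simpl; [apply ml_one; auto| exact Hm].
      * left. apply h.
      * right. apply h.
Qed.
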